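(* Let $s,t,r\in\mathbb{N}$ with $s\leqslant rt$ and $r\leqslant st$. The orbit space $V_{s,t,r}/U(r)$ (with the quotient topology) is homeomorphic to $\mathcal{C}_{s,t,r}$ (with the subspace topology from $\mathbb{C}^{st\times st}$).
   Context: $V_{s,t,r}$ is the set of matrices $V=[A_1;A_2;\dots;A_r]\in\mathbb{C}^{rt\times s}$ (vertical stacking of blocks $A_i\in\mathbb{C}^{t\times s}$) such that $V^{\ast}V=\sum_iA_i^{\ast}A_i=I$ and $A_1,\dots,A_r$ are linearly independent over $\mathbb{C}$. The unitary group $U(r)$ acts on $V_{s,t,r}$ by $U\cdot V=(U\otimes I_t)V$, and $V_{s,t,r}/U(r)$ is the set of orbits. $\mathcal{C}_{s,t,r}$ is the set of positive semi-definite $C_{AB}\in\mathbb{C}^{st\times st}$ on $\mathbb{C}^s\otimes\mathbb{C}^t$ of rank $r$ with $\mathrm{tr}_BC_{AB}=\frac1sI$. *)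

(* Defs.v *)
From HB Require Import structures.
From mathcomp Require Import all_boot all_order all_algebra.
From mathcomp Require Import all_classical all_reals all_analysis.
From mathcomp.real_closed Require Import complex.
Import numFieldNormedType.Exports.

Unset Printing Implicit Defensive.

Import Order.TTheory GRing.Theory Num.Theory.
Local Open Scope ring_scope.
Local Open Scope classical_set_scope.
Local Open Scope quotient_scope.

(* The complex numbers R[i] (R a real type, e.g. the reals) carry the
   topology of their modulus |z| (standard metric topology of C). *)
HB.instance Definition _ (R : realType) :=
  NormedModule.copy (R[i]) (R[i])^o.

Section Defs.
Variable R : realType.
Local Notation C := (R[i]).

Definition adj_mx m n (A : 'M[C]_(m, n)) : 'M[C]_(n, m) :=
  (map_mx (@conjc R) A)^T.

(* Kronecker product A (x) B, with the index pair (i, a) of 'I_m * 'I_p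
   identified with mxvec_index i a (value i * p + a). *)
Definition kron_mx m n p q (A : 'M[C]_(m, n)) (B : 'M[C]_(p, q))
  : 'M[C]_(m * p, n * q) :=
  \matrix_(k, l) \sum_(i < m) \sum_(a < p) \sum_(j < n) \sum_(b < q)
     ((k == mxvec_index i a) && (l == mxvec_index j b))%:R * (A i j * B a b).

(* i-th t x s block A_i of V = [A_1; ...; A_r] *)
Definition blk r t s (V : 'M[C]_(r * t, s)) (i : 'I_r) : 'M[C]_(t, s) :=
  \matrix_(a, b) V (mxvec_index i a) b.

Definition lin_indep_blocks r t s (V : 'M[C]_(r * t, s)) : Prop :=
  forall c : 'I_r -> C,
    \sum_(i < r) c i *: blk r t s V i = 0 -> forall i, c i = 0.

Definition Vset s t r : set 'M[C]_(r * t, s) :=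
  [set V | adj_mx (r * t) s V *m V = 1%:M /\ lin_indep_blocks r t s V].

Definition unitary_mx r (U : 'M[C]_r) : Prop := adj_mx r r U *m U = 1%:M.

Definition uact r t s (U : 'M[C]_r) (V : 'M[C]_(r * t, s)) : 'M[C]_(r * t, s) :=
  kron_mx r r t t U (1%:M : 'M[C]_t) *m V.

Definition Vsp s t r : topologicalType := set_type (Vset s t r).

Definition orbit s t r (V : Vsp s t r) : set (Vsp s t r) :=
  [set W | exists U : 'M[C]_r, unitary_mx r U /\ set_val W = uact r t s U (set_val V)].

Definition same_orbit s t r : rel (Vsp s t r) :=
  fun V W => `[< orbit s t r V = orbit s t r W >].

Lemma same_orbit_refl s t r : reflexive (@same_orbit s t r).
Proof. by move=> V; apply/asboolP. Qed.
Lemma same_orbit_sym s t r : symmetric (@same_orbit s t r).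
Proof.
by move=> V W; apply/asboolP/asboolP => ->.
Qed.
Lemma same_orbit_trans s t r : transitive (@same_orbit s t r).
Proof. by move=> W V X /asboolP H1 /asboolP H2; apply/asboolP; rewrite H1 H2. Qed.

Canonical same_orbit_equiv s t r :=
  EquivRel (@same_orbit s t r) (@same_orbit_refl s t r)
    (@same_orbit_sym s t r) (@same_orbit_trans s t r).

Definition orbit_space s t r : topologicalType :=
  quotient_topology {eq_quot (same_orbit_equiv s t r)}.

Definition psd_mx n (M : 'M[C]_n) : Prop :=
  adj_mx n n M = M /\ forall v : 'cV[C]_n, 0 <= (adj_mx n 1 v *m M *m v) 0 0.

Definition ptraceB s t (M : 'M[C]_(s * t)) : 'M[C]_s :=
  \matrix_(x, y) \sum_(a < t) M (mxvec_index x a) (mxvec_index y a).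

Definition Cset s t r : set 'M[C]_(s * t) :=
  [set M | psd_mx (s * t) M /\ \rank M = r /\ ptraceB s t M = (s%:R)^-1%:M].

Definition Csp s t r : topologicalType := set_type (Cset s t r).

End Defs.

Definition homeomorphic (X Y : topologicalType) : Prop :=
  exists (f : X -> Y) (g : Y -> X),
    [/\ cancel f g, cancel g f, continuous f & continuous g].

(* Main.v *)
Require Import Defs.
From HB Require Import structures.
From mathcomp Require Import all_boot all_order all_algebra.
From mathcomp Require Import all_classical all_reals all_analysis.
From mathcomp.real_closed Require Import complex.
From mathcomp Require Import lra zify.

Module MA1.

Set Implicit Arguments.
Unset Strict Implicit.
Unset Printing Implicit Defensive.
Import Order.TTheory GRing.Theory Num.Theory.
Local Open Scope ring_scope.

Section Alg.
Variable R : realType.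
Local Notation C := (R[i]).
Local Notation adj := (adj_mx R _ _).

Lemma conjcE (x : C) : conjc x = Num.conj x.
Proof.
rewrite {2}[x]Crect rmorphD rmorphM /= conjCi.
rewrite !conj_Creal ?Creal_Re ?Creal_Im //.
rewrite -complexRe -complexIm -complexiE.
by case: x => a b /=; simpc.
Qed.

Lemma conjcM (x y : C) : conjc (x * y) = conjc x * conjc y.
Proof. exact: rmorphM. Qed.
Lemma conjcD (x y : C) : conjc (x + y) = conjc x + conjc y.
Proof. exact: rmorphD. Qed.
Lemma conjcN (x : C) : conjc (- x) = - conjc x.
Proof. exact: rmorphN. Qed.
Lemma conjc_sum (I : Type) (r : seq I) (P : pred I) (F : I -> C) :
  conjc (\sum_(i <- r | P i) F i) = \sum_(i <- r | P i) conjc (F i).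
Proof. exact: rmorph_sum. Qed.

Lemma adjE m n (A : 'M[C]_(m, n)) i j : adj_mx R m n A i j = conjc (A j i).
Proof. by rewrite !mxE. Qed.

Lemma adjK m n (A : 'M[C]_(m, n)) : adj_mx R n m (adj_mx R m n A) = A.
Proof. by apply/matrixP => i j; rewrite !adjE conjcK. Qed.

Lemma adjM m n p (A : 'M[C]_(m, n)) (B : 'M[C]_(n, p)) :
  adj_mx R m p (A *m B) = adj_mx R n p B *m adj_mx R m n A.
Proof.
apply/matrixP => i j; rewrite !mxE rmorph_sum; apply: eq_bigr => k _.
by rewrite !mxE rmorphM mulrC.
Qed.

Lemma adjZ m n a (A : 'M[C]_(m, n)) : adj_mx R m n (a *: A) = conjc a *: adj_mx R m n A.
Proof. by apply/matrixP => i j; rewrite !mxE rmorphM. Qed.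

Lemma adjD m n (A B : 'M[C]_(m, n)) : adj_mx R m n (A + B) = adj_mx R m n A + adj_mx R m n B.
Proof. by apply/matrixP => i j; rewrite !mxE rmorphD. Qed.

Lemma adj1 n : adj_mx R n n (1%:M) = 1%:M.
Proof. by apply/matrixP => i j; rewrite !mxE conjc_nat eq_sym. Qed.

Lemma adj_tC m n (A : 'M[C]_(m, n)) : adj_mx R m n A = (A ^t Num.conj)%sesqui.
Proof. by apply/matrixP => i j; rewrite !mxE conjcE. Qed.

Lemma conjc_mulr_ge0 (x : C) : 0 <= conjc x * x.
Proof. by rewrite mulrC mulcJ_ge0. Qed.

Lemma conjc_mulr_eq0 (x : C) : (conjc x * x == 0) = (x == 0).
Proof. by rewrite mulf_eq0 conjc_eq0 orbb. Qed.

Lemma rv_norm_ge0 n (u : 'rV[C]_n) : 0 <= (u *m adj_mx R 1 n u) 0 0.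
Proof.
rewrite !mxE; apply: sumr_ge0 => i _; rewrite !mxE mulrC; exact: conjc_mulr_ge0.
Qed.

Lemma rv_norm_eq0 n (u : 'rV[C]_n) : (u *m adj_mx R 1 n u) 0 0 = 0 -> u = 0.
Proof.
rewrite !mxE => /eqP; rewrite psumr_eq0; last first.
  by move=> i _; rewrite !mxE mulrC; exact: conjc_mulr_ge0.
move=> /allP H; apply/rowP => i; rewrite mxE.
have := H i (mem_index_enum _); rewrite !mxE mulrC conjc_mulr_eq0 => /eqP.
done.
Qed.

Lemma cv_norm_ge0 n (v : 'cV[C]_n) : 0 <= (adj_mx R n 1 v *m v) 0 0.
Proof.
rewrite !mxE; apply: sumr_ge0 => i _; rewrite !mxE; exact: conjc_mulr_ge0.
Qed.

Lemma cv_norm_eq0 n (v : 'cV[C]_n) : (adj_mx R n 1 v *m v) 0 0 = 0 -> v = 0.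
Proof.
rewrite !mxE => /eqP; rewrite psumr_eq0; last first.
  by move=> i _; rewrite !mxE; exact: conjc_mulr_ge0.
move=> /allP H; apply/colP => i; rewrite mxE.
have := H i (mem_index_enum _); rewrite !mxE conjc_mulr_eq0 => /eqP.
done.
Qed.

Lemma mul_adj_eq0 p n (A : 'M[C]_(p, n)) : A *m adj_mx R p n A = 0 -> A = 0.
Proof.
move=> H; apply/matrixP => i j; rewrite mxE.
have := congr1 (fun M : 'M[C]_p => M i i) H; rewrite !mxE => /eqP; rewrite psumr_eq0; last first.
  by move=> k _; rewrite !mxE mulrC; exact: conjc_mulr_ge0.
move=> /allP/(_ j (mem_index_enum _)); rewrite !mxE mulrC conjc_mulr_eq0 => /eqP.
done.
Qed.

Lemma ker_mul_adj p m n (B : 'M[C]_(m, n)) (u : 'M[C]_(p, m)) :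
  u *m (B *m adj_mx R m n B) = 0 -> u *m B = 0.
Proof.
move=> H; apply: mul_adj_eq0.
by rewrite adjM mulmxA -[u *m B *m _]mulmxA H mul0mx.
Qed.

Lemma rank_mul_adj m n (B : 'M[C]_(m, n)) : \rank (B *m adj_mx R m n B) = \rank B.
Proof.
have e : (kermx (B *m adj_mx R m n B) :=: kermx B)%MS.
  apply/eqmxP/andP; split.
    apply/sub_kermxP; apply: ker_mul_adj; exact: mulmx_ker.
  by apply/sub_kermxP; rewrite mulmxA mulmx_ker mul0mx.
have H1 := mxrank_ker (B *m adj_mx R m n B).
have H2 := mxrank_ker B.
have H3 : \rank (kermx (B *m adj_mx R m n B)) = \rank (kermx B) by apply: eqmx_rank; apply/eqmxP; exact: e.
have h1 := rank_leq_row B; have h2 := rank_leq_row (B *m adj_mx R m n B).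
lia.
Qed.

Lemma rank_adj m n (B : 'M[C]_(m, n)) : \rank (adj_mx R m n B) = \rank B.
Proof. by rewrite /adj_mx mxrank_tr mxrank_map. Qed.

Lemma unitary_sym r (U : 'M[C]_r) : unitary_mx R r U -> U *m adj_mx R r r U = 1%:M.
Proof. by move=> /mulmx1C. Qed.

End Alg.

End MA1.
Import MA1.

Module MA2.

Set Implicit Arguments.
Unset Strict Implicit.
Unset Printing Implicit Defensive.
Import Order.TTheory GRing.Theory Num.Theory.
Local Open Scope ring_scope.

Section Idx.

Definition pairof a b (p : 'I_(a * b)) : 'I_a * 'I_b :=
  enum_val (cast_ord (esym (mxvec_cast a b)) p).

Lemma pairofK a b (i : 'I_a) (j : 'I_b) : pairof (mxvec_index i j) = (i, j).
Proof. by rewrite /pairof /mxvec_index cast_ordK enum_rankK. Qed.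

Lemma sum_mxvec (V : nmodType) a b (F : 'I_(a * b) -> V) :
  \sum_(p < a * b) F p = \sum_(i < a) \sum_(j < b) F (mxvec_index i j).
Proof.
rewrite pair_big /=.
rewrite (reindex (fun ij : 'I_a * 'I_b => mxvec_index ij.1 ij.2)) //=.
exists (@pairof a b) => [[i j] _|p _] /=; first by rewrite pairofK.
by case/mxvec_indexP: p => i j; rewrite pairofK.
Qed.

Lemma mxvec_index_eq a b (i i' : 'I_a) (j j' : 'I_b) :
  (mxvec_index i j == mxvec_index i' j') = (i == i') && (j == j').
Proof.
by rewrite /mxvec_index (inj_eq (@cast_ord_inj _ _ _)) (inj_eq enum_rank_inj) xpair_eqE.
Qed.

Lemma sum_delta (I : finType) (V : nmodType) (x0 : I) (F : I -> V) :
  \sum_(x : I) (if x0 == x then F x else 0) = F x0.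
Proof.
rewrite (bigD1 x0) //= eqxx big1 ?addr0 // => x /negbTE; rewrite eq_sym => ->.
done.
Qed.

End Idx.

Section Alg2.
Variable R : realType.
Local Notation C := (R[i]).

Lemma kron_mxE m n p q (A : 'M[C]_(m, n)) (B : 'M[C]_(p, q)) i a j b :
  kron_mx R _ _ _ _ A B (mxvec_index i a) (mxvec_index j b) = A i j * B a b.
Proof.
rewrite mxE.
under eq_bigr => i' _ do under eq_bigr => a' _ do under eq_bigr => j' _ do
  under eq_bigr => b' _ do rewrite !mxvec_index_eq.
rewrite -(sum_delta i (fun i' => A i' j * B a b)); apply: eq_bigr => i' _.
have [<-|ne] := eqVneq i i'; last first.
  by rewrite big1 // => a' _; rewrite big1 // => j' _; rewrite big1 // => b' _; rewrite /= mul0r.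
rewrite -(sum_delta a (fun a' => A i j * B a' b)); apply: eq_bigr => a' _.
have [<-|ne] := eqVneq a a'; last first.
  by rewrite big1 // => j' _; rewrite big1 // => b' _; rewrite /= ?andbF mul0r.
rewrite -(sum_delta j (fun j' => A i j' * B a b)); apply: eq_bigr => j' _.
have [<-|ne] := eqVneq j j'; last by rewrite big1 // => b' _; rewrite /= ?andbF mul0r.
rewrite -(sum_delta b (fun b' => A i j * B a b')); apply: eq_bigr => b' _.
by have [<-|ne] := eqVneq b b'; rewrite /= ?mul1r ?mul0r.
Qed.

Lemma uactE s t r (U : 'M[C]_r) (V : 'M[C]_(r * t, s)) k a x :
  uact R _ _ _ U V (mxvec_index k a) x = \sum_(l < r) U k l * V (mxvec_index l a) x.
Proof.
rewrite /uact mxE sum_mxvec; apply: eq_bigr => l _.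
under eq_bigr => b _ do rewrite kron_mxE.
rewrite -(sum_delta a (fun b => U k l * V (mxvec_index l b) x)); apply: eq_bigr => b _.
by rewrite mxE; have [<-|ne] := eqVneq a b; rewrite ?(negbTE ne) /= ?mulr1 ?mulr0 ?mul0r.
Qed.

Lemma uact_mul s t r (U U' : 'M[C]_r) (V : 'M[C]_(r * t, s)) :
  uact R _ _ _ U (uact R _ _ _ U' V) = uact R _ _ _ (U *m U') V.
Proof.
apply/matrixP => p x; case/mxvec_indexP: p => k a.
rewrite !uactE.
under eq_bigr => l _ do rewrite uactE mulr_sumr.
rewrite exchange_big /=; apply: eq_bigr => l _; rewrite mxE mulr_suml.
by apply: eq_bigr => l' _; rewrite mulrA.
Qed.

Lemma uact1 s t r (V : 'M[C]_(r * t, s)) : uact R _ _ _ 1%:M V = V.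
Proof.
apply/matrixP => p x; case/mxvec_indexP: p => k a.
rewrite uactE -(sum_delta k (fun l => V (mxvec_index l a) x)); apply: eq_bigr => l _.
by rewrite mxE; have [<-|ne] := eqVneq k l; rewrite ?eqxx ?(negbTE ne) /= ?mul1r ?mul0r.
Qed.

Definition Zm s t r (V : 'M[C]_(r * t, s)) : 'M[C]_(s * t, r) :=
  \matrix_(p, k) conjc (V (mxvec_index k (pairof p).2) (pairof p).1).

Definition Vm s t r (Z : 'M[C]_(s * t, r)) : 'M[C]_(r * t, s) :=
  \matrix_(q, x) conjc (Z (mxvec_index x (pairof q).2) (pairof q).1).

Lemma ZmE s t r (V : 'M[C]_(r * t, s)) x a k :
  Zm V (mxvec_index x a) k = conjc (V (mxvec_index k a) x).
Proof. by rewrite mxE pairofK. Qed.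

Lemma VmE s t r (Z : 'M[C]_(s * t, r)) k a x :
  Vm Z (mxvec_index k a) x = conjc (Z (mxvec_index x a) k).
Proof. by rewrite mxE pairofK. Qed.

Lemma VmK s t r (V : 'M[C]_(r * t, s)) : Vm (Zm V) = V.
Proof.
by apply/matrixP => p x; case/mxvec_indexP: p => k a; rewrite VmE ZmE conjcK.
Qed.

Lemma ZmK s t r (Z : 'M[C]_(s * t, r)) : Zm (Vm Z) = Z.
Proof.
by apply/matrixP => p k; case/mxvec_indexP: p => x a; rewrite ZmE VmE conjcK.
Qed.

Lemma Zm_inj s t r : injective (@Zm s t r).
Proof. by move=> V V' e; rewrite -(VmK V) e VmK. Qed.

Lemma Zm_uact s t r (U : 'M[C]_r) (V : 'M[C]_(r * t, s)) :
  Zm (uact R _ _ _ U V) = Zm V *m adj_mx R r r U.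
Proof.
apply/matrixP => p k; case/mxvec_indexP: p => x a.
rewrite ZmE uactE mxE conjc_sum; apply: eq_bigr => l _.
by rewrite conjcM ZmE adjE mulrC.
Qed.

Lemma ptrace_ZZ s t r (Z : 'M[C]_(s * t, r)) :
  ptraceB R _ _ (Z *m adj_mx R _ _ Z) = adj_mx R _ _ (Vm Z) *m Vm Z.
Proof.
apply/matrixP => x y; rewrite !mxE sum_mxvec exchange_big /=.
apply: eq_bigr => a _; rewrite mxE; apply: eq_bigr => k _.
by rewrite !mxE !pairofK conjcK.
Qed.

Lemma rank_full_colP m r (Z : 'M[C]_(m, r)) :
  \rank Z = r <-> (forall c : 'cV[C]_r, Z *m c = 0 -> c = 0).
Proof.
split.
  move=> rk c Zc.
  have rf : row_free Z^T by rewrite /row_free mxrank_tr rk.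
  have : c^T *m Z^T = 0 by rewrite -trmx_mul Zc trmx0.
  by move/eqP; rewrite (mulmx_free_eq0 _ rf) => /eqP/(congr1 trmx); rewrite trmxK trmx0.
move=> H; rewrite -mxrank_tr; apply/eqP.
rewrite -[_ == _]/(row_free Z^T) -kermx_eq0; apply/eqP/row_matrixP => i.
rewrite row0; apply: (can_inj (@trmxK _ _ _)); rewrite trmx0; apply: H.
have := mulmx_ker Z^T => /(congr1 (row i)); rewrite row_mul row0 => /(congr1 trmx).
by rewrite trmx_mul trmxK trmx0.
Qed.

Lemma lin_indepE s t r (V : 'M[C]_(r * t, s)) :
  lin_indep_blocks R _ _ _ V <-> (forall c : 'cV[C]_r, Zm V *m c = 0 -> c = 0).
Proof.
split.
  move=> H c Zc; apply/colP => k; rewrite mxE.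
  suff : conjc (c k 0) = 0 by move/eqP; rewrite conjc_eq0 => /eqP.
  apply: (H (fun k => conjc (c k 0))).
  apply/matrixP => a x; rewrite summxE mxE.
  transitivity (conjc ((Zm V *m c) (mxvec_index x a) 0)); last by rewrite Zc mxE conjc0.
  rewrite mxE conjc_sum; apply: eq_bigr => l _.
  by rewrite !mxE pairofK /= conjcM conjcK mulrC.
move=> H c Hc k.
have H1 : (\col_k conjc (c k)) = 0 :> 'cV[C]_r.
  apply: H; apply/colP => p; case/mxvec_indexP: p => x a; rewrite !mxE.
  transitivity (conjc ((\sum_k c k *: blk R r t s V k) a x)); last by rewrite Hc mxE conjc0.
  rewrite summxE conjc_sum; apply: eq_bigr => l _.
  by rewrite !mxE pairofK conjcM mulrC.
have := congr1 (fun M : 'cV[C]_r => M k 0) H1; rewrite /= !mxE.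
by move/eqP; rewrite conjc_eq0 => /eqP.
Qed.

End Alg2.

End MA2.
Import MA2.

Module MA3.

Set Implicit Arguments.
Unset Strict Implicit.
Unset Printing Implicit Defensive.
Import Order.TTheory GRing.Theory Num.Theory.
Local Open Scope ring_scope.

Section Alg3.
Variable R : realType.
Local Notation C := (R[i]).

Lemma mx_dim0 p q (A B : 'M[C]_(p, q)) : p = 0%N -> A = B.
Proof. by move=> p0; apply/matrixP => i; have := ltn_ord i; rewrite {2}p0. Qed.

Definition Fm s t r (V : 'M[C]_(r * t, s)) : 'M[C]_(s * t) :=
  (s%:R^-1 : C) *: (Zm V *m adj_mx R _ _ (Zm V)).

Lemma conjc_sinv (s : nat) : conjc (s%:R^-1 : C) = s%:R^-1.
Proof. by rewrite conjc_inv conjc_nat. Qed.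

Lemma ptraceZ s t (a : C) (M : 'M[C]_(s * t)) :
  ptraceB R s t (a *: M) = a *: ptraceB R s t M.
Proof. by apply/matrixP => x y; rewrite !mxE mulr_sumr; apply: eq_bigr => k _; rewrite mxE. Qed.

Lemma psd_ZZ n k (Z : 'M[C]_(n, k)) (a : C) : 0 <= a -> conjc a = a ->
  psd_mx R n (a *: (Z *m adj_mx R _ _ Z)).
Proof.
move=> a0 ca; split.
  by rewrite adjZ adjM adjK ca.
move=> v; rewrite -scalemxAr -scalemxAl mxE; apply: mulr_ge0 => //.
have -> : adj_mx R n 1 v *m (Z *m adj_mx R n k Z) *m v =
    (adj_mx R n 1 v *m Z) *m adj_mx R 1 k (adj_mx R n 1 v *m Z).
  by rewrite adjM adjK !mulmxA.
exact: rv_norm_ge0.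
Qed.

Lemma rank_Zm s t r (V : 'M[C]_(r * t, s)) :
  lin_indep_blocks R _ _ _ V <-> \rank (Zm V) = r.
Proof. by rewrite lin_indepE rank_full_colP. Qed.

Lemma Fm_Cset s t r (V : 'M[C]_(r * t, s)) : (r <= s * t)%N ->
  Vset R s t r V -> Cset R s t r (Fm V).
Proof.
move=> hr [VV li]; split; last split.
- by apply: psd_ZZ; [rewrite invr_ge0 ler0n | exact: conjc_sinv].
- have [s0|sp] := eqVneq s 0%N.
    move: (rank_leq_row (Fm V)); move: (\rank (Fm V)) => k hk.
    by move: hk hr; rewrite s0 mul0n; lia.
  rewrite /Fm (eqmx_scale _ (_ : (s%:R^-1 : C) != 0)); last first.
    by rewrite invr_eq0 pnatr_eq0.
  by rewrite rank_mul_adj; apply/rank_Zm.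
- by rewrite /Fm ptraceZ ptrace_ZZ VmK VV scalemx1.
Qed.

Lemma Fm_uact s t r (U : 'M[C]_r) (V : 'M[C]_(r * t, s)) :
  unitary_mx R r U -> Fm (uact R _ _ _ U V) = Fm V.
Proof.
move=> hU; rewrite /Fm Zm_uact adjM adjK; congr (_ *: _).
by rewrite mulmxA -[Zm V *m _ *m U]mulmxA hU mulmx1.
Qed.

Lemma unitary_mul r (U U' : 'M[C]_r) : unitary_mx R r U -> unitary_mx R r U' ->
  unitary_mx R r (U *m U').
Proof.
move=> h h'; rewrite /unitary_mx adjM mulmxA -[_ *m adj_mx R r r U *m U]mulmxA h.
by rewrite mulmx1.
Qed.

Lemma unitary_adj r (U : 'M[C]_r) : unitary_mx R r U -> unitary_mx R r (adj_mx R r r U).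
Proof. by move=> h; rewrite /unitary_mx adjK; exact: unitary_sym. Qed.

Lemma orbit_uact s t r (V W : Vsp R s t r) (U : 'M[C]_r) : unitary_mx R r U ->
  set_val W = uact R _ _ _ U (set_val V) -> Defs.orbit R s t r V = Defs.orbit R s t r W.
Proof.
move=> hU eW; rewrite /Defs.orbit; apply/seteqP; split => X /= [U1 [hU1 eX]].
  exists (U1 *m adj_mx R r r U); split; first by apply: unitary_mul => //; exact: unitary_adj.
  by rewrite eW uact_mul -mulmxA hU mulmx1.
exists (U1 *m U); split; first exact: unitary_mul.
by rewrite eX eW uact_mul.
Qed.

Lemma unit_gram m r (Z : 'M[C]_(m, r)) : \rank Z = r ->
  adj_mx R _ _ Z *m Z \in unitmx.
Proof.
move=> rk; rewrite -row_free_unit /row_free.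
by rewrite -{2}(adjK Z) rank_mul_adj rank_adj rk.
Qed.

Lemma Fm_inj s t r (V W : 'M[C]_(r * t, s)) : (0 < s)%N ->
  Vset R s t r V -> Vset R s t r W -> Fm V = Fm W ->
  exists U, unitary_mx R r U /\ W = uact R _ _ _ U V.
Proof.
move=> sp [_ liV] [_ liW] eF.
have e : Zm V *m adj_mx R _ _ (Zm V) = Zm W *m adj_mx R _ _ (Zm W).
  by apply: (scalerI (_ : (s%:R^-1 : C) != 0)); [rewrite invr_eq0 pnatr_eq0 -lt0n|].
set Z := Zm V in e *; set Z' := Zm W in e *.
have rZ : \rank Z = r by apply/rank_Zm.
have rZ' : \rank Z' = r by apply/rank_Zm.
have uG := unit_gram rZ; have uG' := unit_gram rZ'.
set G := adj_mx R _ _ Z *m Z in uG; set G' := adj_mx R _ _ Z' *m Z' in uG'.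
set X := adj_mx R _ _ Z *m Z' *m invmx G'.
have ZX : Z *m X = Z'.
  by rewrite /X !mulmxA e -[Z' *m _ *m Z']mulmxA -/G' -mulmxA mulmxV // mulmx1.
have XX : X *m adj_mx R _ _ X = 1%:M.
  have h : G *m G = G *m (X *m adj_mx R _ _ X) *m G.
    rewrite /G -mulmxA [Z *m (adj_mx _ _ _ Z *m Z)]mulmxA e -ZX adjM.
    by rewrite !mulmxA.
  have key : forall (G0 Y : 'M[C]_r), G0 \in unitmx -> G0 *m G0 = G0 *m Y *m G0 -> Y = 1%:M.
    move=> G0 Y uG0 h0; rewrite -mulmxA in h0.
    move/(congr1 (mulmx (invmx G0))): h0; rewrite !mulKmx // => h0.
    by move/(congr1 (mulmx^~ (invmx G0))): h0; rewrite mulmxV // mulmxK.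
  exact: (key G (X *m adj_mx R r r X) uG h).
exists (adj_mx R _ _ X); split; first by rewrite /unitary_mx adjK.
by apply: Zm_inj; rewrite Zm_uact adjK ZX.
Qed.

End Alg3.

End MA3.
Import MA3.

Module MA4.

Set Implicit Arguments.
Unset Strict Implicit.
Unset Printing Implicit Defensive.
Import Order.TTheory GRing.Theory Num.Theory.
Local Open Scope ring_scope.

Section Alg4.
Variable R : realType.
Local Notation C := (R[i]).

Lemma sqrt_conj (x : C) : 0 <= x -> sqrtC x * conjc (sqrtC x) = x.
Proof. by move=> x0; rewrite conjcE geC0_conj ?sqrtC_ge0 // -expr2 sqrtCK. Qed.

Lemma conjc_sqrt (x : C) : 0 <= x -> conjc (sqrtC x) = sqrtC x.
Proof. by move=> x0; rewrite conjcE geC0_conj ?sqrtC_ge0. Qed.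

Lemma row_col_mulE m n p q (A : 'M[C]_(m, n)) (B : 'M[C]_(n, p)) (D : 'M[C]_(p, q)) i j :
  (row i A *m B *m col j D) 0 0 = (A *m B *m D) i j.
Proof.
rewrite -row_mul !mxE; apply: eq_bigr => k _; rewrite !mxE.
by congr (_ * _); apply: eq_bigr => l _; rewrite !mxE.
Qed.

Lemma psd_factor n (M : 'M[C]_n) : psd_mx R n M ->
  exists k (Z : 'M[C]_(n, k)), M = Z *m adj_mx R _ _ Z /\ \rank Z = k.
Proof.
move=> [hM hpos].
have nM : M \is normalmx.
  by apply/normalmxP; rewrite -adj_tC hM.
have /orthomx_spectral_subproof [[P d] /= Pu eM] := nM.
have PQ : P *m adj_mx R n n P = 1%:M by rewrite adj_tC; apply/unitarymxP.
have QP : adj_mx R n n P *m P = 1%:M by apply: mulmx1C.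
rewrite invmx_unitary // -adj_tC in eM.
have dge0 : forall i, 0 <= d 0 i.
  move=> i.
  have := hpos (col i (adj_mx R n n P)).
  have -> : adj_mx R n 1 (col i (adj_mx R n n P)) = row i P.
    by apply/matrixP => a b; rewrite !mxE conjcK.
  rewrite row_col_mulE eM !mulmxA PQ mul1mx -mulmxA PQ mulmx1.
  by rewrite mxE eqxx mulr1n.
pose S := [pred i : 'I_n | d 0 i != 0].
pose sig := fun l : 'I_#|S| => (enum_val l : 'I_n).
exists #|S|.
exists (\matrix_(p, l) (conjc (P (sig l) p) * sqrtC (d 0 (sig l)))).
split.
  apply/matrixP => p q; rewrite eM mul_mx_diag !mxE.
  rewrite (bigID (mem S)) /= [X in _ + X]big1 ?addr0; last first.
    by move=> i; rewrite !inE negbK => /eqP d0; rewrite !mxE d0 mulr0 mul0r.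
  rewrite (big_enum_val (fun i => _)); apply: eq_bigr => l _.
  rewrite /sig !mxE conjcM conjcK -!mulrA; congr (_ * _).
  by rewrite mulrCA sqrt_conj // mulrC.
apply/eqP; rewrite eqn_leq rank_leq_col /=.
set Z := \matrix_(p, l) _.
have eG : adj_mx R _ _ Z *m Z = diag_mx (\row_l d 0 (sig l)).
  apply/matrixP => l l'; rewrite !mxE.
  transitivity (conjc (sqrtC (d 0 (sig l))) * sqrtC (d 0 (sig l')) *
     (P *m adj_mx R n n P) (sig l) (sig l')).
    rewrite mxE mulr_sumr; apply: eq_bigr => p _; rewrite !mxE conjcM conjcK.
    by rewrite mulrACA mulrC -!mulrA; congr (_ * _); rewrite mulrC mulrA.
  rewrite PQ !mxE (inj_eq enum_val_inj).
  have [<-|ne] := eqVneq l l'; last by rewrite !mulr0.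
  by rewrite !mulr1 mulrC sqrt_conj.
apply: (leq_trans _ (mxrankM_maxr (adj_mx R _ _ Z) Z)); rewrite eG mxrank_unit //.
rewrite unitmxE det_diag unitfE; apply/prodf_neq0 => l _; rewrite mxE.
by have := enum_valP l; rewrite inE.
Qed.

Lemma Fm_surj s t r (M : 'M[C]_(s * t)) : (r <= s * t)%N -> Cset R s t r M ->
  exists V : 'M[C]_(r * t, s), Vset R s t r V /\ Fm V = M.
Proof.
move=> hr [psdM [rkM ptM]].
have [s0|sp] := eqVneq s 0%N.
  have r0 : r = 0%N by move: hr; rewrite s0 mul0n; lia.
  exists 0; split; [split|].
  - exact: mx_dim0.
  - by move=> c _ i; move: (ltn_ord i); rewrite [X in (_ < X)%N]r0.
  - by apply: mx_dim0; rewrite s0.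
have [k [Z [eZ rkZ]]] := psd_factor psdM.
have ek : k = r by rewrite -rkZ -rank_mul_adj -eZ.
subst k.
pose a : C := sqrtC (s%:R).
have a0 : 0 <= (s%:R : C) by rewrite ler0n.
have aa : a * conjc a = s%:R by apply: sqrt_conj.
have an0 : a != 0 by rewrite sqrtC_eq0 pnatr_eq0.
have sn0 : (s%:R : C) != 0 by rewrite pnatr_eq0.
have eZZ : (a *: Z) *m adj_mx R _ _ (a *: Z) = s%:R *: M.
  by rewrite adjZ -scalemxAl -scalemxAr scalerA aa eZ.
exists (Vm (a *: Z)); split; [split|].
- by rewrite -ptrace_ZZ eZZ ptraceZ ptM scale_scalar_mx mulfV.
- by apply/rank_Zm; rewrite ZmK (eqmx_scale _ an0).
- by rewrite /Fm ZmK eZZ scalerA mulVf // scale1r.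
Qed.

End Alg4.

End MA4.
Import MA4.

Module MA5.

Set Implicit Arguments.
Unset Strict Implicit.
Unset Printing Implicit Defensive.
Import Order.TTheory GRing.Theory Num.Theory.
Local Open Scope ring_scope.
Local Open Scope classical_set_scope.
Local Open Scope quotient_scope.

Section Orb.
Variable R : realType.
Local Notation C := (R[i]).
Variables (s t r : nat).
Hypothesis hr : (r <= s * t)%N.

Lemma mx_dim0c p q (A B : 'M[C]_(p, q)) : q = 0%N -> A = B.
Proof. by move=> q0; apply/matrixP => i j; have := ltn_ord j; rewrite {2}q0. Qed.

Lemma VspP (V : Vsp R s t r) : Vset R s t r (set_val V).
Proof. exact: set_valP. Qed.

Lemma same_orbitE (V W : Vsp R s t r) :
  same_orbit R s t r V W = (Fm (set_val V) == Fm (set_val W)).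
Proof.
rewrite /same_orbit; apply/asboolP/eqP.
  move=> e.
  have : Defs.orbit R s t r W W.
    by exists 1%:M; split; [rewrite /unitary_mx adj1 mulmx1 | rewrite uact1].
  by rewrite -e => -[U [hU ->]]; rewrite Fm_uact.
move=> eF; have [s0|sp] := eqVneq s 0%N.
  suff -> : V = W by [].
  by apply: val_inj; apply: mx_dim0c.
have sp' : (0 < s)%N by rewrite lt0n.
have [U [hU eW]] := Fm_inj sp' (VspP V) (VspP W) eF.
exact: orbit_uact hU eW.
Qed.

Local Notation OS := (orbit_space R s t r).

Lemma piP (V W : Vsp R s t r) :
  (\pi_OS V = \pi_OS W) <-> Fm (set_val V) = Fm (set_val W).
Proof.
split.
  by move=> h; apply/eqP; rewrite -same_orbitE; apply/eqquotP; exact: h.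
by move=> h; apply/eqquotP; rewrite /= same_orbitE h.
Qed.

End Orb.

End MA5.
Import MA5.

Module MT1.

Set Implicit Arguments.
Unset Strict Implicit.
Unset Printing Implicit Defensive.
Import Order.TTheory GRing.Theory Num.Theory.
Local Open Scope ring_scope.
Local Open Scope classical_set_scope.

Lemma near_all {T : Type} {F : set_system T} {FF : Filter F} (I : finType) (P : I -> T -> Prop) :
  (forall i, \forall x \near F, P i x) -> \forall x \near F, forall i, P i x.
Proof.
move=> h.
have : forall l : seq I, \forall x \near F, forall i, i \in l -> P i x.
  elim => [|a l IH]; first by apply: nearW => x i.
  apply: filterS2 (h a) IH => x ha hl i; rewrite in_cons => /orP[/eqP->|]//.
  exact: hl.
move=> /(_ (enum I)); apply: filterS => x hx i; apply: hx; exact: mem_enum.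
Qed.

Section Top.
Variable R : realType.
Local Notation C := (R[i]).

Lemma mx_cont (T : topologicalType) m n (f : T -> 'M[C]_(m, n)) :
  (forall i j, continuous (fun x => f x i j)) -> continuous f.
Proof.
move=> h x A [P hP sPA]; rewrite nbhs_simpl /=.
have : \forall y \near x, forall ij : 'I_m * 'I_n, P ij.1 ij.2 (f y ij.1 ij.2).
  apply: near_all => -[i j] /=; exact: (h i j x _ (hP i j)).
by apply: filterS => y hy; apply: sPA => i j; exact: (hy (i, j)).
Qed.

Lemma conjc_continuous : continuous (@conjc R : C -> C).
Proof.
move=> x; apply/(@cvgrPdist_lt _ _ _ (nbhs x) (nbhs_filter x)) => e e0; near=> y.
rewrite -conjcN -conjcD normcJ.
near: y; exact: cvgr_dist_lt.
Unshelve. all: by end_near. Qed.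

Lemma cont_sum (T : topologicalType) (I : finType) (F : I -> T -> C) :
  (forall i, continuous (F i)) -> continuous (fun x => \sum_i F i x).
Proof.
move=> h.
suff : forall l : seq I, continuous (fun x => \sum_(i <- l) F i x) by apply.
elim => [|a l IH].
  have -> : (fun x => \sum_(i <- [::]) F i x) = (fun=> 0) by apply: funext => x; rewrite big_nil.
  exact: cst_continuous.
have -> : (fun x => \sum_(i <- a :: l) F i x) = (fun x => F a x + \sum_(i <- l) F i x).
  by apply: funext => x; rewrite big_cons.
move=> x; apply: continuousD; [exact: h | exact: IH].
Qed.

End Top.

End MT1.
Import MT1.

Module MT2.

Set Implicit Arguments.
Unset Strict Implicit.
Unset Printing Implicit Defensive.
Import Order.TTheory GRing.Theory Num.Theory.
Local Open Scope ring_scope.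
Local Open Scope classical_set_scope.

Section Top2.
Variable R : realType.
Local Notation C := (R[i]).
Variable T : topologicalType.

Lemma entry_cont m n (f : T -> 'M[C]_(m, n)) i j :
  continuous f -> continuous (fun x => f x i j).
Proof.
move=> hf x; apply: (@continuous_comp _ _ _ f (fun M : 'M[C]_(m, n) => M i j)).
  exact: hf.
exact: coord_continuous.
Qed.

Lemma conj_cont (f : T -> C) : continuous f -> continuous (fun x => conjc (f x)).
Proof.
move=> hf x; apply: (@continuous_comp _ _ _ f conjc); first exact: hf.
exact: conjc_continuous.
Qed.

Lemma mulmx_cont m n p (f : T -> 'M[C]_(m, n)) (g : T -> 'M[C]_(n, p)) :
  continuous f -> continuous g -> continuous (fun x => f x *m g x).
Proof.
move=> hf hg; apply: mx_cont => i j.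
have -> : (fun x => (f x *m g x) i j) = (fun x => \sum_k f x i k * g x k j).
  by apply: funext => x; rewrite mxE.
apply: cont_sum => k x; apply: continuousM; [exact: entry_cont | exact: entry_cont].
Qed.

Lemma adj_cont m n (f : T -> 'M[C]_(m, n)) :
  continuous f -> continuous (fun x => adj_mx R m n (f x)).
Proof.
move=> hf; apply: mx_cont => i j.
have -> : (fun x => adj_mx R m n (f x) i j) = (fun x => conjc (f x j i)).
  by apply: funext => x; rewrite adjE.
by apply: conj_cont; apply: entry_cont.
Qed.

Lemma scale_cont m n (a : C) (f : T -> 'M[C]_(m, n)) :
  continuous f -> continuous (fun x => a *: f x).
Proof.
move=> hf; apply: mx_cont => i j.
have -> : (fun x => (a *: f x) i j) = (fun x => a * f x i j).
  by apply: funext => x; rewrite mxE.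
move=> x; apply: continuousM; [exact: cst_continuous | exact: entry_cont].
Qed.

End Top2.

Section Top3.
Variable R : realType.
Local Notation C := (R[i]).

Lemma id_cont m n : continuous (fun X : 'M[C]_(m, n) => X).
Proof. by move=> x. Qed.

Lemma Zm_cont s t r : continuous (@Zm R s t r).
Proof.
apply: mx_cont => p k.
have -> : (fun V : 'M[C]_(r * t, s) => Zm V p k) =
   (fun V => conjc (V (mxvec_index k (pairof p).2) (pairof p).1)).
  by apply: funext => V; rewrite mxE.
by apply: conj_cont; apply: entry_cont; exact: id_cont.
Qed.

Lemma Fm_cont s t r : continuous (@Fm R s t r).
Proof.
rewrite /Fm; apply: scale_cont; apply: mulmx_cont; first exact: Zm_cont.
by apply: adj_cont; exact: Zm_cont.
Qed.

Lemma gram_cont m n : continuous (fun X : 'M[C]_(m, n) => adj_mx R m n X *m X).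
Proof. by apply: mulmx_cont; [apply: adj_cont|]; exact: id_cont. Qed.

End Top3.

End MT2.
Import MT2.

Module MT3.

Set Implicit Arguments.
Unset Strict Implicit.
Unset Printing Implicit Defensive.
Import Order.TTheory GRing.Theory Num.Theory.
Import numFieldNormedType.Exports.
Local Open Scope complex_scope.
Local Open Scope ring_scope.
Local Open Scope classical_set_scope.

Section Cpt.
Variable R : realType.
Local Notation C := (R[i]).

Lemma normc_real (a : R) : `|a%:C| = `|a|%:C :> C.
Proof.
by rewrite normc_def /= expr0n /= addr0 sqrtr_sqr.
Qed.

Lemma rc_cont : continuous (fun a : R => a%:C : C).
Proof.
move=> a; apply/(@cvgrPdist_lt _ _ _ _ (nbhs_filter a)) => e e0.
case: e e0 => a' b' e0.
have := e0; rewrite ltcE /= => /andP[/eqP b0 ap].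
rewrite b0; near=> y.
rewrite -rmorphB normc_real ltcR.
near: y; exact: (@cvgr_dist_lt _ _ _ (nbhs a) (nbhs_filter a) id a (@cvg_id _ (nbhs a)) _ ap).
Unshelve. all: by end_near. Qed.

Definition phiC (z : R * R) : C := (z.1 +i* z.2)%C.

Lemma phiC_cont : continuous phiC.
Proof.
have -> : phiC = (fun z => z.1%:C + 'i%C * z.2%:C).
  by apply: funext => -[a b]; rewrite /phiC /=; simpc.
move=> z; apply: (@continuousD _ C _ (fun z : R * R => z.1%:C) (fun z => 'i%C * z.2%:C)).
  apply: (@continuous_comp _ _ _ fst (fun a : R => a%:C : C)); first exact: cvg_fst.
  exact: rc_cont.
apply: (@continuousM C _ (fun=> 'i%C) (fun z : R * R => z.2%:C)); first exact: cst_continuous.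
apply: (@continuous_comp _ _ _ snd (fun a : R => a%:C : C)); first exact: cvg_snd.
exact: rc_cont.
Qed.

Definition Dc : set C := phiC @` (`[-1, 1] `*` `[-1, 1]).

Lemma Dc_compact : compact Dc.
Proof.
apply: continuous_compact; last by apply: compact_setX; exact: segment_compact.
by apply: continuous_subspaceT; exact: phiC_cont.
Qed.

Lemma Dc_mem (z : C) : conjc z * z <= 1 -> Dc z.
Proof.
case: z => a b; rewrite /= lecE /= => /andP[_ h].
have h' : a * a + b * b <= 1 by move: h; rewrite mulNr opprK.
exists (a, b) => //; split; rewrite /= in_itv /=; apply/andP; split; nra.
Qed.

Lemma box_compact m n : compact [set X : 'M[C]_(m, n) | forall i j, Dc (X i j)].
Proof.
have hc : compact [set v : 'rV[C]_(m * n) | forall k, Dc (v ord0 k)].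
  by apply: (@rV_compact _ _ (fun=> Dc)) => k; exact: Dc_compact.
have hv : continuous (fun v : 'rV[C]_(m * n) => vec_mx v).
  apply: mx_cont => i j.
  have -> : (fun v : 'rV[C]_(m * n) => vec_mx v i j) = (fun v => v 0 (mxvec_index i j)).
    by apply: funext => v; rewrite mxE.
  by apply: entry_cont; exact: id_cont.
have := continuous_compact _ hc.
move=> /(_ _ vec_mx (continuous_subspaceT hv)).
congr compact; apply/seteqP; split => X /=.
  by move=> [v hv' <-] i j; rewrite mxE; exact: hv'.
move=> hX; exists (mxvec X); last exact: mxvecK.
by move=> k; case/mxvec_indexP: k => i j; rewrite mxvecE.
Qed.

Lemma K_closed m n : closed [set X : 'M[C]_(m, n) | adj_mx R m n X *m X = 1%:M].
Proof.
have -> : [set X : 'M[C]_(m, n) | adj_mx R m n X *m X = 1%:M] =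
    (fun X => adj_mx R m n X *m X) @^-1` [set 1%:M].
  by [].
apply: preimage_closed.
  by move=> x _; exact: gram_cont.
apply: accessible_closed_set1; apply: hausdorff_accessible; exact: norm_hausdorff.
Qed.

Lemma K_compact m n : compact [set X : 'M[C]_(m, n) | adj_mx R m n X *m X = 1%:M].
Proof.
have -> : [set X : 'M[C]_(m, n) | adj_mx R m n X *m X = 1%:M] =
  [set X : 'M[C]_(m, n) | forall i j, Dc (X i j)] `&`
  [set X : 'M[C]_(m, n) | adj_mx R m n X *m X = 1%:M].
  apply/seteqP; split => X //= hX; last by case: hX.
  split => // i j; apply: Dc_mem.
  have := congr1 (fun M : 'M[C]_n => M j j) hX; rewrite /= !mxE eqxx mulr1n => h.
  rewrite -h (bigD1 i) //= adjE lerDl; apply: sumr_ge0 => k _; rewrite adjE.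
  exact: conjc_mulr_ge0.
apply: compact_closedI; [exact: box_compact | exact: K_closed].
Qed.

End Cpt.

End MT3.
Import MT3.

Module MT4.

Set Implicit Arguments.
Unset Strict Implicit.
Unset Printing Implicit Defensive.
Import Order.TTheory GRing.Theory Num.Theory.
Import numFieldNormedType.Exports.
Local Open Scope ring_scope.
Local Open Scope classical_set_scope.
Local Open Scope quotient_scope.

Section Main.
Variable R : realType.
Local Notation C := (R[i]).
Variables (s t r : nat).
Hypothesis hr : (r <= s * t)%N.
Local Notation VS := (Vsp R s t r).
Local Notation CS := (Csp R s t r).
Local Notation OS := (orbit_space R s t r).

Lemma CspP (c : CS) : Cset R s t r (set_val c).
Proof. exact: set_valP. Qed.

Definition Fv (V : VS) : CS :=
  @exist _ (fun x => x \in Cset R s t r) (Fm (set_val V)) (mem_set (Fm_Cset hr (VspP V))).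

Lemma Fv_val V : set_val (Fv V) = Fm (set_val V).
Proof. by []. Qed.

Definition sect (c : CS) : VS :=
  let: exist V hV := cid (Fm_surj hr (CspP c)) in
  @exist _ (fun x => x \in Vset R s t r) V (mem_set hV.1).

Lemma sectP c : Fm (set_val (sect c)) = set_val c.
Proof. by rewrite /sect; case: cid => V [hV e]. Qed.

Definition fmap (q : OS) : CS := Fv (repr q).
Definition gmap (c : CS) : OS := \pi_OS (sect c).

Lemma fmapK : cancel fmap gmap.
Proof.
move=> q; rewrite /gmap /fmap -[RHS]reprK; apply/piP.
by rewrite sectP Fv_val.
Qed.

Lemma gmapK : cancel gmap fmap.
Proof.
move=> c; apply: val_inj.
have e : set_val (fmap (gmap c)) = set_val c.
  by rewrite /fmap /gmap Fv_val -sectP; apply/piP; rewrite reprK.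
exact: e.
Qed.

Lemma Fv_cont : continuous Fv.
Proof.
apply: continuous_comp_initial.
move=> V; apply: (@continuous_comp _ _ _ set_val (@Fm R s t r)).
  exact: initial_continuous.
exact: Fm_cont.
Qed.

Lemma fmap_cont : continuous fmap.
Proof.
apply: (@repr_comp_continuous _ _ _ Fv Fv_cont).
move=> V W /eqP /piP e; apply/eqP; apply: val_inj.
have e' : set_val (Fv V) = set_val (Fv W) by rewrite !Fv_val e.
exact: e'.
Qed.

Lemma Vset_of_K (X : 'M[C]_(r * t, s)) :
  adj_mx R _ _ X *m X = 1%:M -> \rank (Fm X) = r -> Vset R s t r X.
Proof.
move=> hX rk; split => //; apply/rank_Zm.
have [s0|sp] := eqVneq s 0%N.
  move: (rank_leq_row (Zm X)); move: (\rank (Zm X)) => k hk.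
  by move: hk hr; rewrite s0 mul0n; lia.
move: rk; rewrite /Fm (eqmx_scale _ (_ : (s%:R^-1 : C) != 0)); last first.
  by rewrite invr_eq0 pnatr_eq0.
by rewrite rank_mul_adj.
Qed.

Lemma gmap_cont : continuous gmap.
Proof.
move=> c A /= hA.
have [Ob [[oO Ogc] OA]] : exists Ob, open_nbhs (gmap c) Ob /\ Ob `<=` A.
  by move: hA; rewrite (@nbhsE OS) => -[B hB1 hB2]; exists B.
move: oO; rewrite /open /= /quotient_open => -[W oW eW].
pose K := [set X : 'M[C]_(r * t, s) | adj_mx R _ _ X *m X = 1%:M].
pose K' := K `&` ~` W.
have cK' : compact K' by apply: compact_closedI; [exact: K_compact | exact: open_closedC].
have cFK : compact (@Fm R s t r @` K').
  by apply: continuous_compact cK'; apply: continuous_subspaceT; exact: Fm_cont.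
have clFK : closed (@Fm R s t r @` K').
  by apply: compact_closed cFK; exact: norm_hausdorff.
have nFK : ~ (@Fm R s t r @` K') (set_val c).
  move=> [X [hK hW] eX].
  have hV : Vset R s t r X by apply: Vset_of_K => //; rewrite eX; case: (CspP c) => _ [].
  pose XV : VS := @exist _ (fun x => x \in Vset R s t r) X (mem_set hV).
  have : (\pi_OS @^-1` Ob) XV.
    have e : \pi_OS XV = gmap c by apply/piP; rewrite sectP.
    by rewrite /preimage /= e.
  by rewrite -eW /=.
have : nbhs (set_val c) (~` (@Fm R s t r @` K')).
  by apply: open_nbhs_nbhs; split => //; exact: closed_openC.
have hsc : continuous (fun c : CS => set_val c) by exact: initial_continuous.
move=> /(hsc c) /=.
move=> h.
apply: (@filterS _ (nbhs c) (nbhs_filter c) (set_val @^-1` (~` (@Fm R s t r @` K'))) (gmap @^-1` A) _ h) => c' hc'; apply: OA.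
have : (set_val @^-1` W) (sect c').
  apply: contrapT => hW; apply: hc'.
  exists (set_val (sect c')); last exact: sectP.
  by split => //; case: (VspP (sect c')).
by rewrite eW.
Qed.

End Main.



End MT4.
Import MT4.

Theorem lemma8 (R : realType) (s t r : nat) :
  (s <= r * t)%N -> (r <= s * t)%N ->
  homeomorphic (orbit_space R s t r) (Csp R s t r).
Proof.
move=> _ hr; exists (fmap hr), (gmap hr); split.
- exact: fmapK.
- exact: gmapK.
- exact: fmap_cont.
- exact: gmap_cont.
Qed.
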